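(* The action of $O_d(\mathbb R)$ on $U_d(\mathbb R)\subset\mathbb R^d\oplus\mathfrak{so}(d,\mathbb R)$ is free.
   Context: Fix $d\ge2$. $V=\mathbb C^d\oplus\mathfrak{so}(d,\mathbb C)$, elements $(v,M)$ with $v=(c_1,\dots,c_d)^\top$, $M$ skew-symmetric, $M_{ij}=c_{ij}=-M_{ji}$ for $i<j$; $O_d(\mathbb K)=\{A\in\mathbb K^{d\times d}:AA^\top=I\}$ acts by $A\cdot(v,M)=(Av,AMA^\top)$. $L^{(1)}=\{c_1=\dots=c_{d-1}=0\}$, $L^{(i)}=\{(v,M)\in L^{(i-1)}:c_{k(d-i+2)}=0,\ 1\le k\le d-i\}$ for $2\le i\le d-1$. $f_1=\sum c_i^2$; for $2\le i\le d-1$, $f_i$ is the $O_d(\mathbb C)$-invariant rational function on $V$ with $f_i|_{L^{(i-1)}}=c_{1(d-i+2)}^2+\dots+c_{(d-i+1)(d-i+2)}^2$; $f_d$ is the invariant rational function with $f_d|_{L^{(d-1)}}=c_{12}^2$ (these exist and are unique). $U_d(\mathbb C)$ is the set of points of $V$ in the domain of all $f_k$ with $\prod_kf_k\neq0$, and $U_d(\mathbb R)=U_d(\mathbb C)\cap(\mathbb R^d\oplus\mathfrak{so}(d,\mathbb R))$. An action is free if all stabilizers are trivial. *)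

(* Defs.v *)
From HB Require Import structures.
From mathcomp Require Import all_boot all_order all_algebra.
From mathcomp Require Import reals.
From mathcomp Require Import complex.
Set Implicit Arguments. Unset Strict Implicit. Unset Printing Implicit Defensive.
Import Order.TTheory GRing.Theory Num.Theory.
Local Open Scope ring_scope.

(* Ambient points (v, M) with v a column vector in C^d and M a d x d matrix;
   V = C^d (+) so(d,C) is the set of those with M skew-symmetric. *)
Definition pt (C : Type) (d : nat) := ('cV[C]_d * 'M[C]_d)%type.

Definition inV (C : pzRingType) d (x : pt C d) : Prop := x.2^T = - x.2.

Definition act (C : pzRingType) d (A : 'M[C]_d) (x : pt C d) : pt C d :=
  (A *m x.1, A *m x.2 *m A^T).

Definition orth (K : pzRingType) d (A : 'M[K]_d) : Prop := A *m A^T = 1%:M.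

(* Polynomial functions in the coordinates c_i = v_i and c_ij = M_ij. *)
Inductive polyfun (C : pzRingType) (d : nat) : (pt C d -> C) -> Prop :=
| pf_const (c : C) : polyfun (fun _ => c)
| pf_vec (i : 'I_d) : polyfun (fun x => x.1 i ord0)
| pf_mat (i j : 'I_d) : polyfun (fun x => x.2 i j)
| pf_add f g : polyfun f -> polyfun g -> polyfun (fun x => f x + g x)
| pf_mul f g : polyfun f -> polyfun g -> polyfun (fun x => f x * g x).

(* A rational function on V is given by a pair (p, q) of polynomial functions
   with q not identically zero on V (representing p/q). *)
Definition ratfun (C : pzRingType) d (p q : pt C d -> C) : Prop :=
  [/\ polyfun p, polyfun q & exists x, inV x /\ q x != 0].

(* p/q is O_d(C)-invariant: (p/q) o A = p/q as rational functions on V. *)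
Definition orth_invariant (C : pzRingType) d (p q : pt C d -> C) : Prop :=
  forall A : 'M[C]_d, orth A ->
    forall x, inV x -> p (act A x) * q x = p x * q (act A x).

(* Membership in L^{(i)} (1 <= i <= d-1), 0-indexed coordinates:
   c_1 = ... = c_{d-1} = 0, and for 2 <= j <= i, c_{k (d-j+2)} = 0 for
   1 <= k <= d-j. *)
Definition inL (C : pzRingType) d (i : nat) (x : pt C d) : Prop :=
  inV x /\
  (forall k : 'I_d, (k < d.-1)%N -> x.1 k ord0 = 0) /\
  (forall j : nat, (2 <= j <= i)%N ->
     forall k l : 'I_d, (k < d - j)%N -> (l : nat) = (d - j + 1)%N ->
       x.2 k l = 0).

(* The prescribed restriction of f_i to L^{(i-1)} for 2 <= i <= d:
   c_{1 (d-i+2)}^2 + ... + c_{(d-i+1)(d-i+2)}^2  (for i = d this is c_{12}^2). *)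
Definition frestr (C : pzRingType) d (i : nat) (x : pt C d) : C :=
  \sum_(k < d | (k < d - i + 1)%N)
     \sum_(l < d | (l : nat) == (d - i + 1)%N) x.2 k l ^+ 2.

Definition f1 (C : pzRingType) d (x : pt C d) : C :=
  \sum_(i < d) x.1 i ord0 ^+ 2.

(* (p, q) represents f_k (1 <= k <= d):
   - k = 1: p/q = f_1 as rational functions on V;
   - k >= 2: p/q is an O_d(C)-invariant rational function whose restriction
     to L^{(k-1)} is defined and equals frestr k. *)
Definition represents_f (C : pzRingType) d (k : nat) (p q : pt C d -> C)
  : Prop :=
  ratfun p q /\
  if k == 1%N then forall x, inV x -> p x = f1 x * q x
  else [/\ orth_invariant p q,
           (exists x, inL (k.-1) x /\ q x != 0) &
           forall x, inL (k.-1) x -> p x = frestr k x * q x].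

(* U_d(C): points of V in the domain of every f_k with prod_k f_k != 0. *)
Definition inU (C : pzRingType) d (x : pt C d) : Prop :=
  inV x /\
  forall k : nat, (1 <= k <= d)%N ->
    exists p q, [/\ represents_f k p q, q x != 0 & p x != 0].

Definition cplx_pt (R : rcfType) d (x : pt R d) : pt R[i] d :=
  (map_mx (fun r : R => Complex r 0) x.1, map_mx (fun r : R => Complex r 0) x.2).

Definition inUR (R : rcfType) d (x : pt R d) : Prop := inU (cplx_pt x).

(* Main.v *)
Require Import Defs.
From HB Require Import structures.
From mathcomp Require Import all_boot all_order all_algebra.
From mathcomp Require Import reals complex.
From mathcomp Require Import ring zify.
Import GRing.Theory Num.Theory.
Local Open Scope ring_scope.
Set Implicit Arguments. Unset Strict Implicit.
Section ComplexPart.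
Variable C : numFieldType.
Variable d : nat.

Definition line (y0 y1 : pt C d) (t : C) : pt C d :=
  (y0.1 + t *: (y1.1 - y0.1), y0.2 + t *: (y1.2 - y0.2)).

Definition pal (h : pt C d -> C) :=
  forall y0 y1, exists r : {poly C}, forall t, h (line y0 y1 t) = r.[t].

Lemma pal_const c : pal (fun _ => c).
Proof. by move=> y0 y1; exists c%:P => t; rewrite hornerC. Qed.

Lemma pal_add f g : pal f -> pal g -> pal (fun x => f x + g x).
Proof.
move=> hf hg y0 y1; have [r1 h1] := hf y0 y1; have [r2 h2] := hg y0 y1.
by exists (r1 + r2) => t; rewrite hornerD h1 h2.
Qed.

Lemma pal_mul f g : pal f -> pal g -> pal (fun x => f x * g x).
Proof.
move=> hf hg y0 y1; have [r1 h1] := hf y0 y1; have [r2 h2] := hg y0 y1.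
by exists (r1 * r2) => t; rewrite hornerM h1 h2.
Qed.

Lemma pal_opp f : pal f -> pal (fun x => - f x).
Proof.
move=> hf y0 y1; have [r1 h1] := hf y0 y1.
by exists (- r1) => t; rewrite hornerN h1.
Qed.

Lemma polyfun_pal f : polyfun f -> pal f.
Proof.
elim=> {f}.
- exact: pal_const.
- move=> i y0 y1; exists ((y0.1 i ord0)%:P + 'X * (y1.1 i ord0 - y0.1 i ord0)%:P) => t.
  by rewrite /line /= !mxE !hornerE.
- move=> i j y0 y1; exists ((y0.2 i j)%:P + 'X * (y1.2 i j - y0.2 i j)%:P) => t.
  by rewrite /line /= !mxE !hornerE.
- by move=> f g _ hf _ hg; apply: pal_add.
- by move=> f g _ hf _ hg; apply: pal_mul.
Qed.

Lemma pal_frestr k : pal (@frestr C d k).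
Proof.
move=> y0 y1.
exists (\sum_(a < d | (a < d - k + 1)%N) \sum_(l < d | (l:nat) == (d - k + 1)%N)
   ((y0.2 a l)%:P + 'X * (y1.2 a l - y0.2 a l)%:P) ^+ 2) => t.
rewrite /frestr horner_sum; apply: eq_bigr => a _; rewrite horner_sum.
apply: eq_bigr => l _.
by rewrite /line /= !mxE !hornerE.
Qed.

Lemma act_line B y0 y1 t : act B (line y0 y1 t) = line (act B y0) (act B y1) t.
Proof.
rewrite /act /line /=; congr pair.
  by rewrite mulmxDr -scalemxAr mulmxBr.
by rewrite mulmxDr mulmxDl -scalemxAr -scalemxAl mulmxBr mulmxBl.
Qed.

Lemma pal_act B h : pal h -> pal (fun y => h (act B y)).
Proof.
move=> hh y0 y1; have [r hr] := hh (act B y0) (act B y1).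
by exists r => t; rewrite act_line hr.
Qed.

Lemma line0 y0 y1 : line y0 y1 0 = y0.
Proof. by case: y0 => a b; rewrite /line /= !scale0r !addr0. Qed.

Lemma line1 y0 y1 : line y0 y1 1 = y1.
Proof. by case: y1 => a b; rewrite /line /= !scale1r ![y0.1 + _]addrC ![y0.2 + _]addrC !subrK. Qed.

Lemma inL_line i y0 y1 t : inL i y0 -> inL i y1 -> inL i (line y0 y1 t).
Proof.
move=> [V0 [v0 m0]] [V1 [v1 m1]]; split; [|split].
- rewrite /inV /= in V0 V1 *.
  apply/matrixP => a b; rewrite !mxE.
  have e0 := congr1 (fun M : 'M_d => M a b) V0; have e1 := congr1 (fun M : 'M_d => M a b) V1.
  rewrite /= !mxE in e0 e1; rewrite e0 e1; ring.
- by move=> k hk; rewrite /= !mxE v0 // v1 // subrr mulr0 addr0.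
- by move=> j hj k l hk hl; rewrite /= !mxE (m0 j hj k l) // (m1 j hj k l) // subrr mulr0 addr0.
Qed.

Lemma poly_zero (r : {poly C}) : (forall t, r.[t] = 0) -> r = 0.
Proof.
move=> h; apply/eqP; apply: contraT => nz.
have := @max_poly_roots _ r [seq i%:R | i <- iota 0 (size r)] nz.
rewrite size_map size_iota ltnn; apply.
- by apply/allP => z /mapP [i _ ->]; rewrite /root h.
- rewrite map_inj_uniq ?iota_uniq // => a b /eqP; rewrite eqr_nat => /eqP.
  done.
Qed.

Lemma lemE k (p q : pt C d -> C) : (2 <= k)%N -> represents_f k p q ->
  forall B, orth B -> forall y, inL k.-1 y ->
    p (act B y) = frestr k y * q (act B y).
Proof.
move=> hk [[pp pq _]].
rewrite (negbTE (_ : k != 1%N)); last by case: k hk => [|[]].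
case=> inv [y1 [Ly1 qy1]] res B oB.
have step : forall y, inL k.-1 y ->
    q y * (p (act B y) - frestr k y * q (act B y)) = 0.
  move=> y Ly; have [->|nz] := eqVneq (q y) 0; first by rewrite mul0r.
  have := inv B oB y Ly.1; rewrite (res y Ly) => e.
  apply/eqP; rewrite mulrBr subr_eq0; apply/eqP; rewrite mulrC e; ring.
move=> y Ly.
have pg : pal (fun z => p (act B z) - frestr k z * q (act B z)).
  apply: pal_add; first exact/pal_act/polyfun_pal.
  by apply/pal_opp/pal_mul; [exact: pal_frestr | exact/pal_act/polyfun_pal].
have [rq hq] := @polyfun_pal q pq y y1.
have [rg hg] := pg y y1.
have : rq * rg = 0.
  by apply: poly_zero => t; rewrite hornerM -hq -hg; apply: step; exact: inL_line.
move/eqP; rewrite mulf_eq0 => /orP [/eqP rq0 | /eqP rg0].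
  by move: qy1; rewrite -(line1 y y1) hq rq0 horner0 eqxx.
apply/eqP; rewrite -subr_eq0; apply/eqP.
by have := hg 0; rewrite line0 rg0 horner0.
Qed.

End ComplexPart.
Section RealPart.
Variable R : rcfType.
Variable d : nat.
Implicit Types (X Y Z u w : 'cV[R]_d).

Definition dot X Y : R := (X^T *m Y) 0 0.

Lemma dotE X Y : dot X Y = \sum_i X i 0 * Y i 0.
Proof. by rewrite /dot mxE; apply: eq_bigr => i _; rewrite mxE. Qed.

Lemma dotC X Y : dot X Y = dot Y X.
Proof. by rewrite !dotE; apply: eq_bigr => i _; rewrite mulrC. Qed.

Lemma dotBl X Y Z : dot (X - Y) Z = dot X Z - dot Y Z.
Proof. by rewrite !dotE -sumrB; apply: eq_bigr => i _; rewrite !mxE mulrBl. Qed.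

Lemma dotZl a X Z : dot (a *: X) Z = a * dot X Z.
Proof. by rewrite !dotE mulr_sumr; apply: eq_bigr => i _; rewrite !mxE mulrA. Qed.

Lemma dot_ev m X : dot (delta_mx m 0) X = X m 0.
Proof.
rewrite dotE (bigD1 m) //= big1 => [|i /negbTE ne]; rewrite !mxE ?eqxx ?ne /=.
  by rewrite mul1r addr0.
by rewrite mul0r.
Qed.

Lemma trmx_dot X Y : X^T *m Y = (dot X Y)%:M.
Proof. exact: mx11_scalar. Qed.

Lemma dot_self0 X : dot X X = 0 -> X = 0.
Proof.
rewrite dotE => h; apply/matrixP => i j; rewrite (ord1 j) mxE.
have pos : forall k : 'I_d, true -> 0 <= X k 0 * X k 0.
  by move=> k _; rewrite -expr2 sqr_ge0.
have := psumr_eq0P pos h (i := i) isT.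
by move/eqP; rewrite mulf_eq0 orbb => /eqP.
Qed.

Definition hh u : 'M[R]_d := 1%:M - (2 / dot u u) *: (u *m u^T).

Lemma hh_mul u X : hh u *m X = X - (2 / dot u u * dot u X) *: u.
Proof.
by rewrite /hh mulmxBl mul1mx -scalemxAl -mulmxA trmx_dot mul_mx_scalar scalerA.
Qed.

Lemma hh_sym u : (hh u)^T = hh u.
Proof. by rewrite /hh linearB /= trmx1 linearZ /= trmx_mul trmxK. Qed.

Lemma hh_orth u : orth (hh u).
Proof.
rewrite /orth hh_sym.
have e : u^T *m hh u = (u - (2 / dot u u * dot u u) *: u)^T.
  by rewrite -hh_mul trmx_mul hh_sym.
rewrite {1}/hh mulmxBl mul1mx -scalemxAl -mulmxA e linearB linearZ /=.
rewrite mulmxBr [(_ *: u)^T]linearZ /= -scalemxAr scalerN scalerBr scalerA /hh.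
have -> : 2 / dot u u * (2 / dot u u * dot u u) = 2 / dot u u + 2 / dot u u.
  have [->|nz] := eqVneq (dot u u) 0; first by rewrite invr0 !(mulr0, mul0r) addr0.
  by rewrite divfK // mulr_natr mulr2n.
by rewrite scalerDl opprB addrK subrK.
Qed.

Lemma hh_fix u X : dot u X = 0 -> hh u *m X = X.
Proof. by move=> h; rewrite hh_mul h mulr0 scale0r subr0. Qed.

Lemma hh_map w m :
  hh (w - Num.sqrt (dot w w) *: delta_mx m 0) *m w = Num.sqrt (dot w w) *: delta_mx m 0.
Proof.
set s := Num.sqrt (dot w w); set u := w - s *: delta_mx m 0.
have N0 : 0 <= dot w w by rewrite dotE sumr_ge0 // => i _; rewrite -expr2 sqr_ge0.
have ss : s * s = dot w w by rewrite -expr2 sqr_sqrtr.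
have uw : dot u w = dot w w - s * w m 0 by rewrite /u dotBl dotZl dot_ev.
have um : u m 0 = w m 0 - s by rewrite /u !mxE eqxx /= mulr1.
have uu : dot u u = 2 * dot u w.
  rewrite {1}/u dotBl dotZl dot_ev um [dot w u]dotC uw -ss.
  ring.
rewrite hh_mul.
have [h0|nz] := eqVneq (dot u w) 0.
  have u0 : u = 0 by apply: dot_self0; rewrite uu h0 mulr0.
  by rewrite h0 mulr0 scale0r subr0; apply/eqP; rewrite -subr_eq0 -/u u0.
rewrite uu invfM mulrA divff ?pnatr_eq0 // mul1r mulVf // scale1r /u.
by rewrite opprB addrC subrK.
Qed.

Definition supp_le (m : nat) X := forall r : 'I_d, (m < r)%N -> X r 0 = 0.
Definition supp_gt (m : nat) X := forall r : 'I_d, (r <= m)%N -> X r 0 = 0.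

Lemma dot_supp m u Z : supp_le m u -> supp_gt m Z -> dot u Z = 0.
Proof.
move=> hu hz; rewrite dotE big1 // => i _.
case: (leqP i m) => h; first by rewrite hz // mulr0.
by rewrite hu // mul0r.
Qed.

End RealPart.
Section Act.
Variable K : fieldType.
Variable d : nat.

Lemma act_comp (A B : 'M[K]_d) x : act A (act B x) = act (A *m B) x.
Proof. by rewrite /act /= !mulmxA trmx_mul !mulmxA. Qed.

Lemma orth_tr (A : 'M[K]_d) : orth A -> A^T *m A = 1%:M.
Proof. exact: mulmx1C. Qed.

Lemma orth_mul (A B : 'M[K]_d) : orth A -> orth B -> orth (A *m B).
Proof.
by move=> hA hB; rewrite /orth trmx_mul mulmxA -(mulmxA A) hB mulmx1 hA.
Qed.

Lemma orth_trmx (A : 'M[K]_d) : orth A -> orth A^T.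
Proof. by move=> hA; rewrite /orth trmxK orth_tr. Qed.

Lemma act1 (x : pt K d) : act 1%:M x = x.
Proof. by case: x => a b; rewrite /act /= trmx1 !mul1mx mulmx1. Qed.

Lemma act_inV (B : 'M[K]_d) x : inV x -> inV (act B x).
Proof.
by rewrite /inV /= => h; rewrite !trmx_mul trmxK h mulNmx mulmxN mulmxA.
Qed.

End Act.

Section Reduction.
Variable R : rcfType.
Variable d : nat.

Lemma red (x : pt R d) : inV x -> forall j, (1 <= j <= d.-1)%N ->
  exists B, orth B /\ inL j (act B x).
Proof.
move=> Vx; elim=> [//|j IH] /andP [_ hj].
case: j IH hj => [_ hj | j IH hj].
- have mlt : (d.-1 < d)%N by lia.
  pose m := Ordinal mlt.
  pose w := x.1; pose s := Num.sqrt (dot w w).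
  exists (hh (w - s *: delta_mx m 0)); split; first exact: hh_orth.
  split; first exact: act_inV. split.
  + move=> k hk /=; rewrite hh_map !mxE.
    rewrite (_ : (k == m) = false) ?mulr0 //; apply/negbTE; apply/eqP => e.
    by move: hk; rewrite e /= ltnn.
  + by move=> j' hj'; exfalso; move: hj'; lia.
- have [B [oB Ly]] := IH (ltac:(lia)).
  set y := act B x in Ly.
  have clt : (d - j.+1 < d)%N by lia.
  pose c := Ordinal clt.
  have mlt : (d - j.+1 - 1 < d)%N by lia.
  pose m := Ordinal mlt.
  pose w : 'cV[R]_d := \col_r (if (r <= m)%N then y.2 r c else 0).
  pose s := Num.sqrt (dot w w). pose u := w - s *: delta_mx m 0.
  have su : supp_le m u.
    move=> r hr; rewrite !mxE leqNgt hr /=.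
    rewrite (_ : (r == m) = false) ?mulr0 ?subr0 //; apply/negbTE; apply/eqP => e.
    by move: hr; rewrite e ltnn.
  exists (hh u *m B); split; first exact: orth_mul (hh_orth _) oB.
  rewrite -act_comp -/y.
  have [Vy [vy my]] := Ly.
  split; first exact: act_inV. split.
  + move=> k hk; change ((hh u *m y.1) k ord0 = 0); rewrite hh_fix; first exact: vy.
    by apply: (dot_supp su) => r hr; apply: vy; move: hr; rewrite /=; lia.
  + move=> j' hj' k l hk hl.
    have el : (hh u)^T *m (delta_mx l 0 : 'cV[R]_d) = delta_mx l 0.
      by rewrite hh_sym hh_fix // dotC dot_ev; apply: su; rewrite /= hl; lia.
    have entry : forall A : 'M[R]_d, A k l = (A *m (delta_mx l 0 : 'cV[R]_d)) k 0.
      by move=> A; rewrite -colE mxE.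
    change ((hh u *m y.2 *m (hh u)^T) k l = 0).
    rewrite entry -mulmxA el -mulmxA -colE.
    case: (ltnP j' j.+2) => hj2.
    * rewrite hh_fix; first by rewrite mxE; apply: (my j') => //; lia.
      apply: (dot_supp su) => r hr; rewrite mxE; apply: (my j') => //; first lia.
      by move: hr; rewrite /=; lia.
    * have lc : l = c by apply/val_inj; rewrite /= hl; lia.
      pose z : 'cV[R]_d := \col_r (if (r <= m)%N then 0 else y.2 r c).
      have -> : col l y.2 = w + z.
        by apply/matrixP => r i; rewrite (ord1 i) lc !mxE; case: (r <= m)%N; rewrite ?addr0 ?add0r.
      rewrite mulmxDr hh_map hh_fix.
        rewrite !mxE (_ : (k <= m)%N) /=; last by rewrite /=; lia.
        rewrite (_ : (k == m) = false) ?mulr0 ?addr0 //; apply/negbTE; apply/eqP => e.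
        by move: hk; rewrite e /=; lia.
      by apply: (dot_supp su) => r hr; rewrite mxE hr.
Qed.

Lemma stab_id (y : pt R d) (A : 'M[R]_d) :
  inL d.-1 y -> (forall r : 'I_d, (d.-1 <= r)%N -> y.1 r 0 != 0) ->
  (forall r c : 'I_d, r.+1 = c :> nat -> y.2 r c != 0) ->
  orth A -> act A y = y -> A = 1%:M.
Proof.
move=> [Vy [vy my]] v0 a0 oA h.
have e1 : A *m y.1 = y.1 := congr1 fst h.
have e2 : A *m y.2 *m A^T = y.2 := congr1 snd h.
have AM : A *m y.2 = y.2 *m A.
  by rewrite -{2}e2 -mulmxA (orth_tr oA) mulmx1.
pose fixed (X : 'cV[R]_d) := A *m X = X.
have fixM X : fixed X -> fixed (y.2 *m X).
  by rewrite /fixed => hX; rewrite mulmxA AM -mulmxA hX.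
have fix_supp : forall c : nat, (forall r : 'I_d, (c <= r)%N -> fixed (delta_mx r 0)) ->
    forall X : 'cV[R]_d, (forall r : 'I_d, (r < c)%N -> X r 0 = 0) -> fixed X.
  move=> c hc X hX; rewrite /fixed.
  have -> := matrix_sum_delta X.
  rewrite mulmx_sumr; apply: eq_bigr => i _; rewrite mulmx_sumr; apply: eq_bigr => j _.
  rewrite (ord1 j) -scalemxAr; case: (ltnP i c) => hi.
    by rewrite hX // !scale0r.
  by rewrite hc.
have key : forall t, (t < d)%N -> forall r : 'I_d, (d.-1 - t <= r)%N -> fixed (delta_mx r 0).
  elim=> [_ r hr | t IH ht r hr].
  - have yv : y.1 = y.1 r 0 *: delta_mx r 0.
      apply/matrixP => i j; rewrite (ord1 j) !mxE.
      case: (eqVneq i r) => [->|ne]; first by rewrite eqxx /= mulr1.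
      rewrite /= mulr0; apply: vy.
      have : (i : nat) != r by [].
      have := ltn_ord i; have := ltn_ord r; move: hr; lia.
    move: e1; rewrite {1}yv -scalemxAr {2}yv => /(scalerI (v0 r _)); apply.
    by move: hr; lia.
  - case: (leqP (d.-1 - t) r) => hrt; first exact: IH (ltnW ht) r hrt.
    have clt : (r.+1 < d)%N by lia.
    pose c := Ordinal clt.
    have hc : forall r' : 'I_d, (c <= r')%N -> fixed (delta_mx r' 0).
      by move=> r' hr'; apply: IH; [lia | move: hr'; rewrite /=; lia].
    have fc : fixed (y.2 *m delta_mx c 0) by apply: fixM; apply: hc.
    pose z : 'cV[R]_d := y.2 *m delta_mx c 0 - y.2 r c *: delta_mx r 0.
    have fz : fixed z.
      apply: (fix_supp c hc) => r' hr'.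
      rewrite /z -colE !mxE.
      case: (eqVneq r' r) => [->|ne]; first by rewrite eqxx /= mulr1 subrr.
      rewrite /= mulr0 subr0.
      have hr'' : (r' < r)%N.
        have : (r' : nat) != r by []. by move: hr'; rewrite /=; lia.
      apply: (my (d - c + 1)%N); rewrite /=; lia.
    have : fixed (y.2 r c *: delta_mx r 0).
      have -> : y.2 r c *: delta_mx r 0 = y.2 *m delta_mx c 0 - z by rewrite /z opprB addrC subrK.
      by rewrite /fixed mulmxBr fc fz.
    rewrite /fixed -scalemxAr => /(scalerI (a0 r c erefl)); done.
apply/matrixP => i j; have dpos := ltn_ord j.
have := key d.-1 (ltac:(lia)) j (ltac:(lia)).
move/(congr1 (fun M : 'cV[R]_d => M i 0)); rewrite -colE !mxE => ->.
by rewrite eqxx andbT.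
Qed.

End Reduction.

Section Main.
Variable R : rcfType.
Variable d : nat.

Lemma cplx_ptE (x : pt R d) :
  cplx_pt x = (map_mx (real_complex R) x.1, map_mx (real_complex R) x.2).
Proof. by []. Qed.

Lemma cplx_act (B : 'M[R]_d) y :
  cplx_pt (act B y) = act (map_mx (real_complex R) B) (cplx_pt y).
Proof. by rewrite !cplx_ptE /act /= !map_mxM map_trmx. Qed.

Lemma orth_map (B : 'M[R]_d) : orth B -> orth (map_mx (real_complex R) B).
Proof. by move=> hB; rewrite /orth map_trmx -map_mxM hB map_mx1. Qed.

Lemma inL_cplx i (y : pt R d) : inL i y -> inL i (cplx_pt y).
Proof.
move=> [Vy [vy my]]; split; [|split].
- by rewrite /inV cplx_ptE /= map_trmx Vy map_mxN.
- by move=> k hk; rewrite cplx_ptE /= mxE vy // rmorph0.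
- by move=> j hj k l hk hl; rewrite cplx_ptE /= mxE (my j) // rmorph0.
Qed.

End Main.

Lemma inL_mono (C : pzRingType) d i j (y : pt C d) : inL i y -> (j <= i)%N -> inL j y.
Proof.
move=> [V [v m]] ji; split=> //; split=> // j' hj'; apply: m.
by move: hj' ji; lia.
Qed.

Theorem corollary3p13 (R : realType) (d : nat) (hd : (2 <= d)%N) :
  forall (x : pt R d), inUR x ->
  forall A : 'M[R]_d, orth A -> act A x = x -> A = 1%:M.
Proof.
move=> x [VC hU] A oA hA.
have Vx : inV x.
  rewrite /inV; apply/matrixP => i j.
  have := congr1 (fun M : 'M[R[i]]_d => M i j) VC; rewrite !mxE => e.
  apply: (@fmorph_inj _ _ (real_complex R)); rewrite rmorphN; exact: e.
have [B [oB Ly]] := @red R d x Vx d.-1 (ltac:(lia)).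
set y := act B x in Ly.
have xy : x = act B^T y by rewrite /y act_comp orth_tr // act1.
have cx : cplx_pt x = act (map_mx (real_complex R) B^T) (cplx_pt y).
  by rewrite {1}xy cplx_act.
have oBT : orth (map_mx (real_complex R) B^T) := orth_map (orth_trmx oB).
have Ly' := inL_cplx Ly.
have [Vy [vy my]] := Ly.
have a0 : forall r c : 'I_d, r.+1 = c :> nat -> y.2 r c != 0.
  move=> r c rc; apply/negP => /eqP y0.
  have := ltn_ord c => cd.
  have k2 : (1 <= d - c + 1 <= d)%N by lia.
  have [p [q [rep qx px]]] := hU (d - c + 1)%N k2.
  have Lk : inL (d - c + 1).-1 (cplx_pt y).
    by apply: (inL_mono Ly'); rewrite -!subn1; lia.
  have := @lemE _ _ (d - c + 1)%N p q (ltac:(lia)) rep _ oBT (cplx_pt y) Lk.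
  rewrite -cx => e; move: px; rewrite e.
  suff -> : frestr (d - c + 1) (cplx_pt y) = 0 by rewrite mul0r eqxx.
  rewrite /frestr big1 // => a ha; rewrite big1 // => l /eqP hl.
  have ya : y.2 a l = 0.
    have lc : l = c by apply/val_inj; rewrite /= hl; lia.
    case: (eqVneq (a : nat) r) => [ar|ne].
      by rewrite lc (_ : a = r) //; apply/val_inj.
    apply: (my (d - c + 1)%N); lia.
  by rewrite cplx_ptE /= mxE ya rmorph0 expr0n.
have v0 : forall r : 'I_d, (d.-1 <= r)%N -> y.1 r 0 != 0.
  move=> r hr; apply/negP => /eqP y0.
  have y10 : y.1 = 0.
    apply/matrixP => i j; rewrite (ord1 j) [in RHS]mxE; case: (ltnP i d.-1) => hi.
      exact: vy.
    have -> : i = r.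
      apply: val_inj => /=; have := ltn_ord i; have := ltn_ord r; move: hi hr; rewrite -!subn1; lia.
    exact: y0.
  have x10 : x.1 = 0 by rewrite xy; change (B^T *m y.1 = 0); rewrite y10 mulmx0.
  have [p [q [[_ hrep] qx px]]] := hU 1%N (ltac:(lia)).
  move: hrep => /= /(_ _ VC) e.
  move: px; rewrite e /f1 big1 ?mul0r ?eqxx // => i _.
  by rewrite cplx_ptE /= x10 !mxE rmorph0 expr0n.
have e : B *m A *m B^T = 1%:M.
  apply: (stab_id Ly v0 a0).
    exact: orth_mul (orth_mul oB oA) (orth_trmx oB).
  by rewrite -!act_comp -xy hA.
have : B^T *m (B *m A *m B^T) *m B = A.
  by rewrite !mulmxA orth_tr // mul1mx -mulmxA orth_tr // mulmx1.
by rewrite e mulmx1 orth_tr.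
Qed.
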